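(* Let $\Gamma$ be a finitely generated non-abelian free group and $\mathsf{G}=\prod_{i=1}^r\mathsf{G}_i$ a product of Lie groups $\mathsf{G}_1,\dots,\mathsf{G}_r$. If $\rho=(\rho_1,\dots,\rho_r):\Gamma\to\mathsf{G}$ is robustly faithful, then there exists $i\in\{1,\dots,r\}$ such that $\rho_i:\Gamma\to\mathsf{G}_i$ is robustly faithful.
   Context: Representation spaces carry the topology of pointwise convergence; a representation is robustly faithful if all representations in some neighborhood of it are injective. *)

(* Defs.v *)
From HB Require Import structures.
From mathcomp Require Import all_boot all_order all_algebra.
From mathcomp Require Import all_classical all_reals all_analysis.
From mathcomp Require Import Rstruct Rstruct_topology.
From Stdlib Require Import Rdefinitions.

Set Implicit Arguments.
Unset Strict Implicit.
Unset Printing Implicit Defensive.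

Import Order.TTheory GRing.Theory Num.Theory.
Import numFieldNormedType.Exports.
Local Open Scope classical_set_scope.
Local Open Scope ring_scope.

(* The free group F_k on k generators, as the set of reduced words.    *)
(* A letter (a, false) is the generator a, (a, true) its inverse.      *)

Definition letter (k : nat) := ('I_k * bool)%type.

Definition cancels (k : nat) (x y : letter k) : bool :=
  (x.1 == y.1) && (x.2 != y.2).

Definition reduced (k : nat) (w : seq (letter k)) : bool :=
  sorted (fun x y => ~~ cancels x y) w.

Definition reduce (k : nat) (w : seq (letter k)) : seq (letter k) :=
  foldr (fun x acc => if acc is y :: t then
                        (if cancels x y then t else x :: acc)
                      else [:: x]) [::] w.

Definition FG (k : nat) := {w : seq (letter k) | reduced w}.

Definition fg_one (k : nat) : FG k := @exist _ (fun w => reduced w) [::] isT.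

(* group law of F_k : concatenate and freely reduce (reduce always
   outputs a reduced word, so the default of insubd is never used) *)
Definition fg_mul (k : nat) (x y : FG k) : FG k :=
  insubd (fg_one k) (reduce (sval x ++ sval y)).

Definition iter_deriv (n m : nat) (vs : seq 'rV[R]_n)
  (f : 'rV[R]_n -> 'rV[R]_m) : 'rV[R]_n -> 'rV[R]_m :=
  foldr (fun v g => fun x => derive g x v) f vs.

Definition smooth_on (n m : nat) (U : set 'rV[R]_n)
  (f : 'rV[R]_n -> 'rV[R]_m) : Prop :=
  forall vs : seq 'rV[R]_n,
    (forall x v, U x -> derivable (iter_deriv vs f) x v) /\
    {within U, continuous (iter_deriv vs f)}.

Definition chart (M : topologicalType) (n : nat)
  (c : set M * (M -> 'rV[R]_n)) : Prop :=
  [/\ open c.1,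
      (forall x y, c.1 x -> c.1 y -> c.2 x = c.2 y -> x = y),
      {within c.1, continuous c.2} &
      (forall V, open V -> V `<=` c.1 -> open (c.2 @` V))].

Definition smooth_atlas (M : topologicalType) (n : nat)
  (A : set (set M * (M -> 'rV[R]_n))) : Prop :=
  [/\ (forall c, A c -> chart c),
      (forall x : M, exists c, A c /\ c.1 x) &
      (forall c d, A c -> A d ->
         exists h : 'rV[R]_n -> 'rV[R]_n,
           (forall x, c.1 x -> d.1 x -> h (c.2 x) = d.2 x) /\
           smooth_on (c.2 @` (c.1 `&` d.1)) h)].

Definition lie_structure (M : topologicalType) (mul : M -> M -> M)
  (inv : M -> M) : Prop :=
  exists (n : nat) (A : set (set M * (M -> 'rV[R]_n))),
  [/\ smooth_atlas A,
      (forall c d e, A c -> A d -> A e ->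
         exists h : 'rV[R]_(n + n) -> 'rV[R]_n,
           (forall x y, c.1 x -> d.1 y -> e.1 (mul x y) ->
              h (row_mx (c.2 x) (d.2 y)) = e.2 (mul x y)) /\
           smooth_on [set z | exists x y, [/\ c.1 x, d.1 y, e.1 (mul x y)
                                             & z = row_mx (c.2 x) (d.2 y)]] h) &
      (forall c d, A c -> A d ->
         exists h : 'rV[R]_n -> 'rV[R]_n,
           (forall x, c.1 x -> d.1 (inv x) -> h (c.2 x) = d.2 (inv x)) /\
           smooth_on [set z | exists x, [/\ c.1 x, d.1 (inv x) & z = c.2 x]] h)].

Record LieGroup := {
  lg_carrier :> topologicalType;
  lg_mul : lg_carrier -> lg_carrier -> lg_carrier;
  lg_inv : lg_carrier -> lg_carrier;
  lg_one : lg_carrier;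
  lg_mulA : forall x y z, lg_mul x (lg_mul y z) = lg_mul (lg_mul x y) z;
  lg_mul1g : forall x, lg_mul lg_one x = x;
  lg_mulVg : forall x, lg_mul (lg_inv x) x = lg_one;
  lg_hausdorff : hausdorff_space lg_carrier;
  lg_lie : lie_structure lg_mul lg_inv
}.

Definition ProdG (r : nat) (G : 'I_r -> LieGroup) : topologicalType :=
  prod_topology (fun i => lg_carrier (G i)).

Definition prod_mul (r : nat) (G : 'I_r -> LieGroup)
  (x y : ProdG G) : ProdG G :=
  fun i => lg_mul (x i) (y i).

(* Hom(F_k, G) carries the topology of pointwise convergence, i.e.     *)
(* the subspace topology of {ptws FG k -> G}.                          *)

Definition is_hom (k : nat) (T : Type) (mul : T -> T -> T) (f : FG k -> T) :=
  forall x y, f (fg_mul x y) = mul (f x) (f y).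

Definition robustly_faithful (k : nat) (T : topologicalType)
  (mul : T -> T -> T) (rho : FG k -> T) : Prop :=
  exists N : set {ptws FG k -> T},
    nbhs (rho : {ptws FG k -> T}) N /\
    forall sigma : FG k -> T, N sigma -> is_hom mul sigma -> injective sigma.

(* Main.v *)
Require Import Defs.
From HB Require Import structures.
From mathcomp Require Import all_boot all_order all_algebra.
From mathcomp Require Import all_classical all_reals all_analysis.
Import Order.TTheory GRing.Theory Num.Theory.
Set Implicit Arguments.

Set Implicit Arguments.
Section W.
Context {k : nat}.
Implicit Types (x y l : letter k) (u v w : seq (letter k)).

Definition step x (acc : seq (letter k)) : seq (letter k) :=
  if acc is y :: t then (if cancels x y then t else x :: acc) else [:: x].

Lemma reduce_cons x w : reduce (x :: w) = step x (reduce w).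
Proof. by []. Qed.

Lemma reduce_cat u v : reduce (u ++ v) = foldr step (reduce v) u.
Proof. by rewrite /reduce foldr_cat. Qed.

Lemma cancelsC x y : cancels x y = cancels y x.
Proof. by rewrite /cancels eq_sym [_.2 == _]eq_sym. Qed.

Definition flip l : letter k := (l.1, ~~ l.2).

Lemma flipK l : flip (flip l) = l.
Proof. by case: l => a b; rewrite /flip /= negbK. Qed.

Lemma cancelsE x y : cancels x y = (y == flip x).
Proof.
case: x y => a b [c d]; rewrite /cancels /flip /= xpair_eqE eq_sym.
by case: b; case: d.
Qed.

Lemma reduced_cons x w : reduced (x :: w) =
  (if w is y :: _ then ~~ cancels x y else true) && reduced w.
Proof. by case: w. Qed.

Lemma reduce_reduced w : reduced (reduce w).
Proof.
elim: w => // x w; rewrite reduce_cons.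
case: (reduce w) => [|y t] // IH; rewrite /step.
case: ifP => c; first by move: IH; rewrite reduced_cons => /andP[].
by rewrite reduced_cons c IH.
Qed.

Lemma reduce_id w : reduced w -> reduce w = w.
Proof.
elim: w => // x w IH; rewrite reduced_cons reduce_cons => /andP[h /IH ->].
by case: w h {IH} => // y t /negbTE h; rewrite /step h.
Qed.

Lemma step_inv l w : reduced w -> step l (step (flip l) w) = w.
Proof.
case: w => [|y t]; first by rewrite /= /cancels /= eqxx; case: (l.2).
move=> H; rewrite /step.
have [e|ne] := eqVneq y l.
  subst y; rewrite cancelsE flipK eqxx.
  case: t H => // z t; rewrite reduced_cons => /andP[/negbTE h _].
  by rewrite /= h.
by rewrite cancelsE flipK (negbTE ne) /= cancelsE eqxx.
Qed.

Definition winv w := rev (map flip w).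

Lemma winv_cons l w : winv (l :: w) = rcons (winv w) (flip l).
Proof. by rewrite /winv /= rev_cons. Qed.

Lemma winv_rcons w l : winv (rcons w l) = flip l :: winv w.
Proof. by rewrite /winv map_rcons rev_rcons. Qed.

Lemma winvK w : winv (winv w) = w.
Proof. by rewrite /winv map_rev revK -map_comp map_id_in // => x _ /=; rewrite flipK. Qed.

Lemma reduce_inv u v : reduce (u ++ winv u ++ v) = reduce v.
Proof.
elim: u v => // l u IH v.
rewrite winv_cons -cats1 -!catA cat_cons reduce_cons IH cat1s reduce_cons.
by rewrite step_inv // reduce_reduced.
Qed.

Lemma reduced_winv w : reduced w -> reduced (winv w).
Proof.
rewrite /reduced /winv rev_sorted sorted_map.
apply: sub_sorted => x y /=.
by rewrite /cancels /flip /= [y.1 == _]eq_sym; case: (x.2); case: (y.2).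
Qed.

Lemma head_winv d w : w != [::] -> head d (winv w) = flip (last d w).
Proof. by case/lastP: w => // s l _; rewrite winv_rcons last_rcons. Qed.

Lemma last_winv d w : w != [::] -> last d (winv w) = flip (head d w).
Proof. by case: w => // l s _; rewrite winv_cons last_rcons. Qed.

Definition ok u v := match u, v with
  | l :: u', q :: _ => ~~ cancels (last l u') q | _, _ => true end.

Lemma red_cat u v : reduced u -> reduced v -> ok u v -> reduced (u ++ v).
Proof.
case: u => // l u; case: v => [|q v]; first by rewrite cats0.
rewrite /reduced /= cat_path => -> /= -> ->; by [].
Qed.

End W.

Set Implicit Arguments.
Section Grp.
Variable G : LieGroup.
Local Notation "x * y" := (lg_mul x y).
Local Notation "1" := (lg_one G).
Implicit Types x y z : G.

Lemma mulgV' x : x * lg_inv x = 1.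
Proof.
set y := lg_inv x.
rewrite -(@lg_mul1g G (x * y)) -(@lg_mulVg G y) -lg_mulA (lg_mulA y x y).
by rewrite (@lg_mulVg G x) lg_mul1g.
Qed.

Lemma mulg1' x : x * 1 = x.
Proof. by rewrite -(lg_mulVg x) lg_mulA mulgV' lg_mul1g. Qed.

Lemma cancelL x y z : x * y = 1 -> x * (y * z) = z.
Proof. by move=> h; rewrite lg_mulA h lg_mul1g. Qed.

Lemma inv_uniq x y : x * y = 1 -> y = lg_inv x.
Proof.
move=> h; rewrite -{1}(@cancelL _ _ y (lg_mulVg x)) h mulg1' //.
Qed.

Lemma mulC1 x y : x * y = 1 -> y * x = 1.
Proof. by move=> /inv_uniq ->; rewrite lg_mulVg. Qed.

Lemma idem1 x : x * x = x -> x = 1.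
Proof.
move=> h; rewrite -{1}(@cancelL _ _ x (lg_mulVg x)) h lg_mulVg //.
Qed.
End Grp.

Section FGhom.
Variable k : nat.

Definition mkFG {w : seq (letter k)} (h : reduced w) : FG k := exist _ w h.

Lemma val_mul (p q : FG k) : sval (fg_mul p q) = reduce (sval p ++ sval q).
Proof. by rewrite /fg_mul insubdK // unfold_in; apply: reduce_reduced. Qed.

Lemma FG_eq (p q : FG k) : sval p = sval q -> p = q.
Proof. exact: val_inj. Qed.

Lemma fg_one1 : fg_mul (fg_one k) (fg_one k) = fg_one k.
Proof. by apply: FG_eq; rewrite val_mul. Qed.

Variable G : LieGroup.
Variable tau : FG k -> G.
Hypothesis htau : is_hom (@lg_mul G) tau.

Lemma hom1 : tau (fg_one k) = lg_one G.
Proof. by apply: idem1; rewrite -htau fg_one1. Qed.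

Definition sing (l : letter k) : FG k := mkFG (isT : reduced [:: l]).

Definition evw (w : seq (letter k)) : G :=
  foldr (fun l acc => lg_mul (tau (sing l)) acc) (lg_one G) w.

Lemma evw_cat u v : evw (u ++ v) = lg_mul (evw u) (evw v).
Proof.
elim: u => [|l u IH] /=; first by rewrite lg_mul1g.
by rewrite IH lg_mulA.
Qed.

Lemma tau_evw w (h : reduced w) : tau (mkFG h) = evw w.
Proof.
elim: w h => [|l w IH] h.
  by rewrite /evw /= -hom1; congr tau; apply: FG_eq.
have hw : reduced w by move: h; rewrite reduced_cons => /andP[].
rewrite /= -(IH hw) -htau; congr tau; apply: FG_eq.
by rewrite val_mul -[sval (sing l) ++ _]/(l :: w) (@reduce_id _ _ h).
Qed.

Lemma tau_inv w (h : reduced w) (h' : reduced (winv w)) :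
  lg_mul (tau (mkFG h')) (tau (mkFG h)) = lg_one G.
Proof.
rewrite -htau -hom1; congr tau; apply: FG_eq.
by rewrite val_mul /= -{2}(winvK w) -[_ ++ _]cats0 -catA reduce_inv.
Qed.

End FGhom.
Set Implicit Arguments.

Section K.
Context {k : nat}.
Implicit Types (x y l : letter k) (u v w : seq (letter k)).

Lemma cancelsE' x y : cancels x y = (x == flip y).
Proof. by rewrite cancelsC cancelsE. Qed.

Lemma flip_eq x y : (flip x == y) = (x == flip y).
Proof. by apply/eqP/eqP => [<-|->]; rewrite flipK. Qed.

Lemma red3 d u v w : reduced u -> reduced (v ++ w) -> u != [::] -> v != [::] ->
  ~~ cancels (last d u) (head d v) -> reduced (u ++ v ++ w).
Proof.
case: u => // l u; case: v => // q v hu hvw _ _ hc.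
by apply: red_cat.
Qed.

Lemma pick_letter (hk : (2 <= k)%N) (F : seq (letter k)) : (size F <= 3)%N ->
  exists l, l \notin F.
Proof.
move=> hF.
have h0 : (0 < k)%N by apply: leq_trans hk.
pose i0 := Ordinal h0; pose i1 := Ordinal hk.
pose L := [:: (i0, false); (i0, true); (i1, false); (i1, true)].
have uL : uniq L by [].
have : ~~ all (mem F) L.
  apply/negP => /allP sub.
  by have := uniq_leq_size uL sub; rewrite /= => h; move: (leq_trans h hF).
by case/allPn => l _ nl; exists l.
Qed.

End K.

Lemma flip_eqE k (x y : letter k) : (flip x == flip y) = (x == y).
Proof. by apply/eqP/eqP => [h|->] //; rewrite -(flipK x) h flipK. Qed.
Set Implicit Arguments.

Lemma kernel_step k (hk : (2 <= k)%N) (a b : FG k) :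
  sval a != [::] -> sval b != [::] ->
  exists c : FG k, sval c != [::] /\
   forall (G : LieGroup) (tau : FG k -> G), is_hom (@lg_mul G) tau ->
     (tau a = lg_one G \/ tau b = lg_one G) -> tau c = lg_one G.
Proof.
case: a => aw ha; case: b => bw hb /= nea neb.
have [d _] := @pick_letter k hk [::] isT.
have [x hx] := @pick_letter k hk [:: flip (head d aw); last d aw] isT.
have [y hy] := @pick_letter k hk [:: flip (head d bw); last d bw; x] isT.
move: hx hy; rewrite !inE !negb_or => /andP[hx1 hx2] /and3P[hy1 hy2 hy3].
have hai := @reduced_winv _ _ ha; have hbi := @reduced_winv _ _ hb.
have neai : winv aw != [::] by rewrite -size_eq0 /winv size_rev size_map size_eq0.
have nebi : winv bw != [::] by rewrite -size_eq0 /winv size_rev size_map size_eq0.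
pose cw := [:: x] ++ aw ++ [:: flip x] ++ [:: y] ++ bw ++ [:: flip y] ++ [:: x] ++
  winv aw ++ [:: flip x] ++ [:: y] ++ winv bw ++ [:: flip y] ++ [::].
have hcw : reduced cw.
  rewrite /cw.
  do 11 (apply: (red3 d); [by [] | | by [] | by [] |
      rewrite /= ?head_winv ?last_winv // cancelsE' ?flipK ?flip_eqE;
      first [by [] | by rewrite eq_sym] ]).
  by [].
exists (mkFG hcw); split; first by [].
move=> G tau htau hab.
rewrite (tau_evw _ htau) /cw !(evw_cat _ tau) /=.
have eA : evw _ tau aw = tau (mkFG ha) by rewrite (tau_evw _ htau).
have eB : evw _ tau bw = tau (mkFG hb) by rewrite (tau_evw _ htau).
have eAi : evw _ tau (winv aw) = tau (mkFG hai) by rewrite (tau_evw _ htau).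
have eBi : evw _ tau (winv bw) = tau (mkFG hbi) by rewrite (tau_evw _ htau).
have iA := tau_inv _ htau _ ha hai.
have iB := tau_inv _ htau _ hb hbi.
have iX := tau_inv _ htau _ (isT : reduced [:: x]) (isT : reduced [:: flip x]).
have iY := tau_inv _ htau _ (isT : reduced [:: y]) (isT : reduced [:: flip y]).
rewrite -/(sing x) -/(sing y) -/(sing (flip x)) -/(sing (flip y)) in iX iY.
rewrite !mulg1' eA eB eAi eBi.
rewrite -/(mkFG ha) -/(mkFG hb) in hab.
have XXi := @mulC1 _ _ _ iX; have YYi := @mulC1 _ _ _ iY; have BBi := @mulC1 _ _ _ iB; have AAi := @mulC1 _ _ _ iA.
case: hab => [hA|hB].
  have hAi : tau (mkFG hai) = lg_one G by rewrite hA mulg1' in iA.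
  rewrite hA hAi !lg_mul1g !(@cancelL _ _ _ _ XXi) (@cancelL _ _ _ _ iY).
  by rewrite (@cancelL _ _ _ _ BBi) YYi.
have hBi : tau (mkFG hbi) = lg_one G by rewrite hB mulg1' in iB.
rewrite hB hBi !lg_mul1g !(@cancelL _ _ _ _ YYi) (@cancelL _ _ _ _ iX).
by rewrite (@cancelL _ _ _ _ AAi) YYi mulg1' XXi.
Qed.
Local Open Scope classical_set_scope.
Set Implicit Arguments.

Lemma cont_into_prod (X : topologicalType) (I : Type) (K : I -> topologicalType)
  (h : X -> prod_topology K) :
  (forall i, continuous (fun x => h x i)) -> continuous h.
Proof.
move=> hc x; apply/cvg_sup => i U.
have /= -> := @nbhsE (initial_topology (fun f : (forall i, K i) => f i)) (h x).
case=> B [[C oC <- ?]] /filterS; apply.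
apply: (hc i x). by apply: open_nbhs_nbhs; split.
Qed.

Lemma nontriv k (a b : FG k) : a <> b ->
  sval (fg_mul (mkFG (@reduced_winv _ _ (svalP b))) a) != [::].
Proof.
move=> nab; apply/eqP => h; apply: nab; apply: FG_eq.
rewrite val_mul /= in h.
have e1 := reduce_inv (sval b) (sval a).
rewrite (@reduce_id _ _ (svalP a)) reduce_cat h in e1.
by rewrite -e1 -/(reduce (sval b)) (@reduce_id _ _ (svalP b)).
Qed.

Lemma kernel_of k (G : LieGroup) (s : FG k -> G) : is_hom (@lg_mul G) s ->
  ~ injective s -> exists e : FG k, sval e != [::] /\ s e = lg_one G.
Proof.
move=> hs ninj.
have [a [b [sab nab]]] : exists a b, s a = s b /\ a <> b.
  apply: contrapT => H; apply: ninj => a b sab.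
  by apply: contrapT => nab; apply: H; exists a, b.
exists (fg_mul (mkFG (@reduced_winv _ _ (svalP b))) a); split; first exact: nontriv.
rewrite hs sab.
case: b {sab nab} => bw hb.
exact: (tau_inv _ hs _ hb).
Qed.
Set Implicit Arguments.

Lemma not_rf k (T : topologicalType) (mul : T -> T -> T) (rho : FG k -> T) :
  ~ robustly_faithful mul rho -> forall M : set {ptws FG k -> T},
  nbhs (rho : {ptws FG k -> T}) M ->
  exists sigma : FG k -> T, M sigma /\ is_hom mul sigma /\ ~ injective sigma.
Proof.
move=> nrf M hM; apply: contrapT => H; apply: nrf; exists M; split => // s Ms hs.
by apply: contrapT => ni; apply: H; exists s.
Qed.

Lemma dfw_in r (G : 'I_r -> LieGroup) (f : ProdG G) (i : 'I_r) (x : G i) :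
  dfwith f i x i = x.
Proof. exact: dfwith_in. Qed.

Lemma dfw_out r (G : 'I_r -> LieGroup) (f : ProdG G) (i j : 'I_r) (x : G i) :
  i != j -> dfwith f i x j = f j.
Proof. exact: dfwith_out. Qed.

Theorem mainTheorem7 (k : nat) (hk : (2 <= k)%N) (r : nat)
  (G : 'I_r -> LieGroup) (rho : FG k -> ProdG G)
  (hrho : is_hom (@prod_mul r G) rho) :
  robustly_faithful (@prod_mul r G) rho ->
  exists i : 'I_r, robustly_faithful (@lg_mul (G i)) (fun w => rho w i).
Proof.
case=> N [hN hinj]; apply: contrapT => hno.
have hn i : ~ robustly_faithful (@lg_mul (G i)) (fun w => rho w i).
  by move=> H; apply: hno; exists i.
move: hN; rewrite nbhsE => -[U [oU Urho] UN].
have P : forall j, (j <= r)%N -> exists t : FG k -> ProdG G,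
  [/\ U t, is_hom (@prod_mul r G) t,
      (forall i : 'I_r, (j <= i)%N -> forall w, t w i = rho w i) &
      exists z : FG k, sval z != [::] /\
        forall i : 'I_r, (i < j)%N -> t z i = lg_one (G i)].
  elim=> [_|j IH hj].
    have h0 : (0 < k)%N by apply: leq_trans hk.
    exists rho; split => //.
    by exists (mkFG (isT : reduced [:: (Ordinal h0, false)])).
  have [t [Ut ht trho [z [nz tz]]]] := IH (ltnW hj).
  pose i := Ordinal hj.
  pose upd (s : {ptws FG k -> G i}) : {ptws FG k -> ProdG G} :=
    fun w => dfwith (t w) i (s w).
  have cupd : continuous upd.
    apply: cont_into_prod => w.
    pose gg : lg_carrier (G i) -> ProdG G := dfwith (t w) i.
    pose pw : {ptws FG k -> G i} -> lg_carrier (G i) := fun s => s w.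
    have cw : continuous (gg \o pw).
      move=> s; apply: continuous_comp.
        exact: (@proj_continuous _ (fun _ : FG k => lg_carrier (G i)) w).
      exact: (@dfwith_continuous _ (fun j => lg_carrier (G j)) (t w) i).
    exact: cw.
  have updrho : upd (fun w => rho w i) = t.
    apply: functional_extensionality_dep => w.
    apply: functional_extensionality_dep => j'.
    rewrite /upd; case: dfwithP => [|j'' _] //.
    by rewrite trho.
  have nb : nbhs ((fun w => rho w i) : {ptws FG k -> G i}) (upd @^-1` U).
    apply: cupd; rewrite updrho; exact: open_nbhs_nbhs.
  have [sg [Usg [hsg nsg]]] := not_rf (hn i) nb.
  have [e [ne sge]] := @kernel_of _ _ _ hsg nsg.
  have [c [nc hc]] := @kernel_step _ hk _ _ nz ne.
  exists (upd sg); split.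
  - exact: Usg.
  - move=> x y; apply: functional_extensionality_dep => j'.
    rewrite /upd /prod_mul; have [<-|nij] := eqVneq i j'.
      by rewrite !dfw_in hsg.
    by rewrite !dfw_out // ht.
  - move=> i' hi' w; rewrite /upd dfw_out; first exact: trho (ltnW hi') w.
    by apply/eqP => ii; move: hi'; rewrite -ii /= ltnn.
  - exists c; split => // i' hi'; rewrite /upd.
    have [<-|nij] := eqVneq i i'.
      rewrite dfw_in; apply: hc => //; by right.
    rewrite dfw_out //; apply: (hc (G i') (fun w => t w i')) => //.
      by move=> x y; rewrite ht.
    left; apply: tz.
    rewrite ltnS leq_eqVlt in hi'; case/orP: hi' => // /eqP ei.
    by case/eqP: nij; apply: val_inj; rewrite /= ei.
have [t [Ut ht _ [z [nz tz]]]] := P r (leqnn r).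
have hz : t z = t (fg_one k).
  apply: functional_extensionality_dep => i.
  rewrite tz //; symmetry; apply: (hom1 (G i) (tau := fun w => t w i)).
  by move=> x y; rewrite ht.
have := hinj t (UN _ Ut) ht _ _ hz.
by move=> ez; move: nz; rewrite ez.
Qed.
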